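(* Let $n\ge1$, $\alpha\in\{1,2,\dots,n\}$, and for integers $l_1>\dots>l_n\ge0$ let $$c_{\mathbf l}(\lambda)=(-1)^{n(n-1)/2}\prod_{k=1}^n\Gamma(2\lambda+2k-1)\cdot\frac{(-1)^{\sum_j l_j}\prod_{1\le a<b\le n}(l_a^2-l_b^2)}{\prod_{j=1}^n\Gamma(-l_j+\lambda+n)\,\Gamma(l_j+\lambda+n)},$$ a meromorphic function of $\lambda$. Then each $c_{\mathbf l}$ is holomorphic at $\lambda=-n+\alpha$; moreover $c_{\mathbf l}(-n+\alpha)\neq0$ if and only if $(l_{n-\alpha+1},\dots,l_{n-1},l_n)=(\alpha-1,\dots,1,0)$, and all nonzero values $c_{\mathbf l}(-n+\alpha)$ have the same sign. Consequently, at $\lambda=-n+\alpha$ the invariant Hermitian form on $C^\infty({\rm SO}(2n))$ with these Fourier coefficients is semidefinite.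
   Context: Here $c_{\mathbf l}(\lambda)$ is, for $\operatorname{Re}\lambda>-1/2$, the Fourier coefficient of $\ell_\lambda(g)=\prod_j|\sin(\varphi_j/2)|^{2\lambda}$ on ${\rm SO}(2n)$ (eigenvalues $e^{\pm i\varphi_j}$) against an irreducible character of highest weight $\mu$, with $l_j=\mu_j+n-j$ ($j<n$), $l_n=|\mu_n|$; $1/\Gamma$ is entire. *)

(* Defs.v *)
From HB Require Import structures.
From mathcomp Require Import all_boot all_order all_algebra.
From mathcomp Require Import all_classical all_reals all_analysis.
Set Implicit Arguments. Unset Strict Implicit. Unset Printing Implicit Defensive.
Import Order.TTheory GRing.Theory Num.Theory.
Import numFieldNormedType.Exports.
Local Open Scope ring_scope.

(* Reciprocal Gamma function 1/Gamma (entire), on real arguments, by Gauss's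
   product formula: 1/Gamma(x) = lim_{m -> oo} x(x+1)...(x+m) / (m! m^x).
   It vanishes exactly at the poles 0,-1,-2,... of Gamma. *)
Definition rgamma (R : realType) (x : R) : R :=
  limn (fun m : nat => (\prod_(i < m.+1) (x + i%:R)) / (m`!%:R * (m%:R `^ x))).

(* c_l(lambda) written with 1/Gamma:
   (-1)^{n(n-1)/2} (-1)^{sum l} prod_{a<b}(l_a^2-l_b^2)
     * prod_j [1/Gamma(-l_j+lambda+n)] [1/Gamma(l_j+lambda+n)]
     / prod_{k=1}^n [1/Gamma(2 lambda + 2k - 1)]
   indices are 0-based: l j for j : 'I_n is l_{j+1}. *)
Definition cl (R : realType) (n : nat) (l : 'I_n -> nat) (lam : R) : R :=
  (-1) ^+ ((n * (n - 1)) %/ 2) * (-1) ^+ (\sum_(j < n) l j)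
  * (\prod_(a < n) \prod_(b < n | (a < b)%N) ((l a)%:R ^+ 2 - (l b)%:R ^+ 2))
  * (\prod_(j < n) (rgamma (- (l j)%:R + lam + n%:R)
                    * rgamma ((l j)%:R + lam + n%:R)))
  / (\prod_(k < n) rgamma (2 * lam + 2 * (k.+1)%:R - 1)).

Definition strictly_decr (n : nat) (l : 'I_n -> nat) : Prop :=
  forall i j : 'I_n, (i < j)%N -> (l j < l i)%N.

(* Main.v *)
Require Import Defs.
From HB Require Import structures.
From mathcomp Require Import all_boot all_order all_algebra.
From mathcomp Require Import all_classical all_reals all_analysis.
From mathcomp Require Import ring lra zify.
Import Order.TTheory GRing.Theory Num.Theory.
Import numFieldNormedType.Exports.
Local Open Scope classical_set_scope.
Local Open Scope ring_scope.

Set Implicit Arguments. Unset Strict Implicit.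

Section Gam.
Variable R : realType.
Implicit Types x s t : R.

Definition P x (m : nat) : R :=
  (\prod_(i < m.+1) (x + i%:R)) / (m`!%:R * (m%:R `^ x)).
Definition A x (m : nat) : R := (\prod_(i < m.+1) (x + i%:R)) / m`!%:R.
Definition G x : R := limn (P x).

Lemma rgammaE x : rgamma x = G x. Proof. by []. Qed.

Lemma fact_neq0 m : (m`!%:R : R) != 0.
Proof. by rewrite gt_eqF // ltr0n fact_gt0. Qed.

Lemma PE x m : (0 < m)%N -> P x m = A x m * expR (- (x * ln m%:R)).
Proof.
move=> m0; rewrite /P /A /powR.
have -> : (m%:R == 0 :> R) = false by rewrite gt_eqF // ltr0n.
by rewrite invfM mulrA expRN.
Qed.

Lemma AS x m : A x m.+1 = A x m * (1 + x / m.+1%:R).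
Proof.
rewrite /A big_ord_recr /= factS natrM.
have h1 := fact_neq0 m.
have h2 : (m.+1%:R : R) != 0 by rewrite pnatr_eq0.
field; apply/andP; split => //.
Qed.

Lemma A_ge0 x m : 0 <= x -> 0 <= A x m.
Proof.
move=> x0; rewrite /A divr_ge0 // prodr_ge0 // => i _.
by rewrite addr_ge0.
Qed.

Lemma A_gt0 x m : 0 < x -> 0 < A x m.
Proof.
move=> x0; rewrite /A divr_gt0 ?ltr0n ?fact_gt0 // prodr_gt0 // => i _.
by rewrite ltr_wpDr.
Qed.

Lemma ln_nat_gt m : (0 < m)%N ->
  (m.+1%:R)^-1 <= ln (m.+1%:R : R) - ln m%:R.
Proof.
move=> m0.
have hm : (0 : R) < m%:R by rewrite ltr0n.
have hm1 : (0 : R) < m.+1%:R by rewrite ltr0n.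
have e : (m%:R : R) = m.+1%:R * (1 + - (m.+1%:R)^-1).
  rewrite mulrDr mulr1 mulrN divff ?gt_eqF // mulrS; ring.
have p2 : 0 < 1 + - (m.+1%:R : R)^-1.
  rewrite e in hm; by rewrite -(pmulr_rgt0 _ hm1).
rewrite e lnM ?posrE //.
have h : -1 < - (m.+1%:R : R)^-1.
  by rewrite ltrN2 invf_lt1 ?ltr0n // ltr1n ltnS.
have := @le_ln1Dx R _ h; move=> H.
by rewrite opprD addrA subrr add0r lerNr.
Qed.

Lemma ineq1 x m : 0 <= x -> (0 < m)%N ->
  (1 + x / m.+1%:R) * expR (- (x * ln m.+1%:R)) <= expR (- (x * ln (m%:R : R))).
Proof.
move=> x0 m0.
have -> : - (x * ln (m%:R : R)) = x * (ln m.+1%:R - ln m%:R) + - (x * ln m.+1%:R) by ring.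
rewrite expRD; apply: ler_wpM2r; first exact: expR_ge0.
apply: le_trans (expR_ge1Dx _).
rewrite lerD2l; apply: ler_wpM2l => //.
exact: ln_nat_gt.
Qed.

Lemma bern (s a : R) : 0 <= s -> s <= 1 -> expR (s * a) <= s * expR a + (1 - s).
Proof.
move=> s0 s1.
have := @convex_expR R (Itv01 s0 s1) a 0.
by rewrite !convRE /= mulr0 addr0 expR0 mulr1.
Qed.

Lemma ineq2 x m : 0 <= x -> x <= 2 -> (0 < m)%N ->
  expR (- (x * ln (m.+2%:R : R))) <= (1 + x / m.+1%:R) * expR (- (x * ln m.+3%:R)).
Proof.
move=> x0 x2 m0.
set d := ln (m.+3%:R : R) - ln m.+2%:R.
have -> : - (x * ln (m.+2%:R : R)) = (x / 2) * (2 * d) + - (x * ln m.+3%:R).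
  by rewrite /d; field.
rewrite expRD; apply: ler_wpM2r; first exact: expR_ge0.
have hx2 : 0 <= x / 2 by rewrite divr_ge0.
have hx2b : x / 2 <= 1 by rewrite ler_pdivrMr //; lra.
apply: le_trans; first exact: (@bern (x / 2) (2 * d) hx2 hx2b).
have ed : expR (2 * d) = (m.+3%:R / m.+2%:R) ^+ 2.
  by rewrite expRM_natl /d expRB !lnK ?posrE ?ltr0n.
rewrite ed.
set k : R := m%:R.
have k1 : 1 <= k by rewrite /k ler1n.
have e3 : (m.+3%:R : R) = k + 3 by rewrite /k -!natr1; ring.
have e2 : (m.+2%:R : R) = k + 2 by rewrite /k -!natr1; ring.
have e1 : (m.+1%:R : R) = k + 1 by rewrite /k -!natr1; ring.
rewrite e3 e2 e1.
have key : ((k + 3) / (k + 2)) ^+ 2 - 1 - 2 / (k + 1) = - (k + 3) / ((k + 2) ^+ 2 * (k + 1)).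
  have km : (1:R) <= m%:R by rewrite ler1n.
  by field; apply/andP; split; apply/negP => /eqP; lra.
have : - (k + 3) / ((k + 2) ^+ 2 * (k + 1)) <= 0.
  rewrite mulNr oppr_le0 divr_ge0 //; [lra|].
  by rewrite mulr_ge0 ?exprn_ge0 //; lra.
rewrite -key => hk.
have : x / 2 * (((k + 3) / (k + 2)) ^+ 2 - 1) <= x / 2 * (2 / (k+1)).
  by rewrite ler_wpM2l ?divr_ge0 //; lra.
have -> : x / 2 * (2 / (k + 1)) = x / (k + 1) by field; apply/negP => /eqP; lra.
lra.
Qed.


Lemma PS x m : (0 < m)%N ->
  P x m.+1 = A x m * ((1 + x / m.+1%:R) * expR (- (x * ln m.+1%:R))).
Proof. by move=> m0; rewrite PE // AS mulrA. Qed.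

Lemma P_decr x m : 0 <= x -> (0 < m)%N -> P x m.+1 <= P x m.
Proof.
move=> x0 m0; rewrite PS // [P x m]PE //.
by apply: ler_wpM2l; [exact: A_ge0 | exact: ineq1].
Qed.

Lemma P_ge0 x m : 0 <= x -> (0 < m)%N -> 0 <= P x m.
Proof. by move=> x0 m0; rewrite PE // mulr_ge0 ?A_ge0 ?expR_ge0. Qed.

Lemma P_mono x m M : 0 <= x -> (0 < m)%N -> (m <= M)%N -> P x M <= P x m.
Proof.
move=> x0 m0 /subnK <-; elim: (M - m)%N => [|k IH]; first by rewrite add0n.
rewrite addSn; apply: le_trans IH; apply: P_decr => //; lia.
Qed.

Lemma P_cvg x : 0 <= x -> cvgn (P x).
Proof.
move=> x0; apply: (@near_nonincreasing_is_cvgn _ _ 0).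
  by exists 1%N => // a /= a1 b ab; apply: P_mono.
by exists 1%N => // n /= n1; exact: P_ge0.
Qed.

Lemma G_le_P x m : 0 <= x -> (0 < m)%N -> G x <= P x m.
Proof.
move=> x0 m0; apply: limr_le; first exact: P_cvg.
by exists m => // M /= mM; exact: P_mono.
Qed.

Definition Q x m := A x m * expR (- (x * ln m.+2%:R)).

Lemma Q_incr x m : 0 <= x -> x <= 2 -> (0 < m)%N -> Q x m <= Q x m.+1.
Proof.
move=> x0 x2 m0; rewrite /Q AS -mulrA.
by apply: ler_wpM2l; [exact: A_ge0 | exact: ineq2].
Qed.

Lemma Q_le_P x m : 0 <= x -> (0 < m)%N -> Q x m <= P x m.
Proof.
move=> x0 m0; rewrite /Q PE //; apply: ler_wpM2l; first exact: A_ge0.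
rewrite ler_expR lerN2; apply: ler_wpM2l => //.
by rewrite ler_ln ?posrE ?ltr0n // ler_nat; lia.
Qed.

Lemma Q_mono x m M : 0 <= x -> x <= 2 -> (0 < m)%N -> (m <= M)%N -> Q x m <= Q x M.
Proof.
move=> x0 x2 m0 /subnK <-; elim: (M - m)%N => [|k IH]; first by rewrite add0n.
rewrite addSn; apply: le_trans IH _; apply: Q_incr => //; lia.
Qed.

Lemma G_ge_Q x m : 0 <= x -> x <= 2 -> (0 < m)%N -> Q x m <= G x.
Proof.
move=> x0 x2 m0; apply: limr_ge; first exact: P_cvg.
exists m => // M /= mM; apply: (@le_trans _ _ (Q x M)); [exact: Q_mono | apply: Q_le_P => //; lia].
Qed.

Lemma G_gt0_02 x : 0 < x -> x <= 2 -> 0 < G x.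
Proof.
move=> x0 x2; apply: lt_le_trans (@G_ge_Q x 1%N (ltW x0) x2 isT).
by rewrite /Q mulr_gt0 ?A_gt0 ?expR_gt0.
Qed.

Lemma P1E x : P x 1 = x * (x + 1).
Proof.
rewrite PE // ln1 mulr0 oppr0 expR0 mulr1 /A !big_ord_recr big_ord0 /=.
by rewrite mul1r addr0 divr1.
Qed.

Lemma ln_add2 m : (0 < m)%N -> ln (m.+2%:R : R) - ln m%:R <= 2 / m%:R.
Proof.
move=> m0.
have hm : (0 : R) < m%:R by rewrite ltr0n.
have e : (m.+2%:R : R) = m%:R * (1 + 2 / m%:R).
  rewrite mulrDr mulr1 mulrCA divff ?gt_eqF // mulr1 -!natr1; ring.
have p2 : 0 < 1 + 2 / (m%:R : R) by rewrite ltr_wpDr // divr_ge0.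
rewrite e lnM ?posrE //.
have h : -1 < 2 / (m%:R : R) by apply: lt_le_trans (_ : 0 <= _); rewrite ?divr_ge0 //; lra.
have := @le_ln1Dx R _ h; move=> H.
by rewrite addrAC subrr add0r.
Qed.

Lemma PG_err x m : 0 <= x -> x <= 2 -> (0 < m)%N ->
  0 <= P x m - G x <= 24 / m%:R.
Proof.
move=> x0 x2 m0; apply/andP; split; first by rewrite subr_ge0 G_le_P.
have hQ := @G_ge_Q x m x0 x2 m0.
have hm : (0 : R) < m%:R by rewrite ltr0n.
set u := x * (ln (m.+2%:R : R) - ln m%:R).
have u0 : 0 <= u.
  rewrite /u mulr_ge0 // subr_ge0 ler_ln ?posrE ?ltr0n // ler_nat; lia.
have u1 : u <= 4 / m%:R.
  rewrite /u; apply: le_trans (ler_wpM2l x0 (@ln_add2 m m0)) _.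
  rewrite mulrA; apply: ler_wpM2r; [by rewrite invr_ge0 ltW | lra].
have eQ : Q x m = P x m * expR (- u).
  rewrite /Q PE // -mulrA -expRD /u; congr (_ * expR _); ring.
have hP : P x m <= 6.
  apply: le_trans (@P_mono x 1 m x0 isT m0) _; rewrite P1E; nra.
have hP0 := @P_ge0 x m x0 m0.
have e1 : 1 - expR (- u) <= u by have := expR_ge1Dx (- u); lra.
have : P x m - G x <= P x m * u.
  have : P x m - Q x m <= P x m * u by rewrite eQ -{1}(mulr1 (P x m)) -mulrBr ler_wpM2l.
  lra.
move=> h; apply: le_trans h _.
have -> : 24 / (m%:R : R) = 6 * (4 / m%:R) by rewrite mulrA -natrM.
by apply: ler_pM.
Qed.


Lemma prod_shift1 s m :
  s * \prod_(i < m.+1) (s + 1 + i%:R) = (\prod_(i < m.+1) (s + i%:R)) * (s + m.+1%:R).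
Proof.
transitivity (\prod_(i < m.+2) (s + i%:R)); last by rewrite big_ord_recr.
rewrite [RHS]big_ord_recl /= addr0; congr (_ * _); apply: eq_bigr => i _.
by rewrite /bump /= add1n -natr1; ring.
Qed.

Lemma PshiftE s m : (0 < m)%N -> s * P (s + 1) m = P s m * (1 + (s + 1) / m%:R).
Proof.
move=> m0; rewrite !PE //.
have hm : (0 : R) < m%:R by rewrite ltr0n.
have e : expR (- ((s + 1) * ln (m%:R : R))) = expR (- (s * ln m%:R)) / m%:R.
  by rewrite mulrDl mul1r opprD expRD [X in _ * X]expRN lnK ?posrE.
rewrite e /A.
set X := \prod_(i < m.+1) (s + 1 + i%:R).
set Y := \prod_(i < m.+1) (s + i%:R).
have h : s * X = Y * (s + m.+1%:R) by exact: prod_shift1.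
have -> : s * (X / m`!%:R * (expR (- (s * ln (m%:R : R))) / m%:R)) =
  (s * X) / m`!%:R * (expR (- (s * ln (m%:R : R))) / m%:R) by ring.
rewrite h -natr1.
have := fact_neq0 m.
by move=> hf; field; rewrite hf gt_eqF.
Qed.

Lemma inv_cvg0 : (fun m : nat => (m%:R : R)^-1) @ \oo --> 0.
Proof. by rewrite -cvg_shiftS; exact: cvg_harmonic. Qed.

Lemma c_cvg s : (fun m : nat => 1 + (s + 1) / m%:R) @ \oo --> (1 : R).
Proof.
have h2 : (fun m : nat => (s + 1) * (m%:R : R)^-1) @ \oo --> 0.
  rewrite -(mulr0 (s + 1)); apply: cvgM; [exact: cvg_cst | exact: inv_cvg0].
rewrite -[X in _ --> X]addr0; apply: cvgD; [exact: cvg_cst | exact: h2].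
Qed.

Lemma c_near s : \forall m \near \oo, 1 + (s + 1) / (m%:R : R) != 0.
Proof.
have := c_cvg s; move/cvgrPdist_lt => /(_ (1/2)) h.
have : (0 : R) < 1/2 by lra.
move/h; apply: filterS => m hm; apply/negP => /eqP e.
by move: hm; rewrite e subr0 normr1; lra.
Qed.

Lemma G_step s : cvgn (P (s + 1)) -> P s @ \oo --> s * G (s + 1).
Proof.
move=> h.
have h1 : (fun m => s * P (s + 1) m) @ \oo --> s * G (s + 1).
  by apply: cvgM; [exact: cvg_cst | exact: h].
have h2 : (fun m => P s m * (1 + (s + 1) / m%:R)) @ \oo --> s * G (s + 1).
  apply: cvg_trans h1; apply: near_eq_cvg; exists 1%N => // m /= m0.
  by rewrite PshiftE.
have h3 : (fun m => P s m * (1 + (s + 1) / m%:R) * (1 + (s + 1) / m%:R)^-1) @ \oo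
    --> s * G (s + 1) * 1^-1.
  apply: cvgM; first exact: h2.
  by apply: cvgV; [exact: oner_neq0 | exact: c_cvg].
rewrite invr1 mulr1 in h3.
apply: cvg_trans h3; apply: near_eq_cvg.
apply: filterS (c_near s) => m hm /=.
by rewrite -mulrA divff // mulr1.
Qed.

Lemma G_shift N s : cvgn (P (s + N%:R)) ->
  cvgn (P s) /\ G s = (\prod_(i < N) (s + i%:R)) * G (s + N%:R).
Proof.
elim: N s => [|N IH] s.
  by rewrite addr0 big_ord0 mul1r.
move=> h.
have h' : cvgn (P (s + 1 + N%:R)).
  by have -> : s + 1 + N%:R = s + N.+1%:R by rewrite -natr1; ring.
have [c1 e1] := IH _ h'.
have hs := @G_step s c1.
split; first by apply/cvg_ex; exists (s * G (s + 1)).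
have -> : G s = s * G (s + 1) by apply: cvg_lim.
rewrite e1 big_ord_recl /= addr0 mulrA; congr (_ * _ * G _).
  by apply: eq_bigr => i _; rewrite /bump /= add1n -natr1; ring.
by rewrite -natr1 addrA addrAC.
Qed.


Lemma A_cvg (F : set_system R) (FF : Filter F) (f : R -> R) a m :
  f @ F --> a -> (fun t => A (f t) m) @ F --> A a m.
Proof.
move=> h; rewrite /A; apply: cvgM; last exact: cvg_cst.
apply: cvg_big => //; first exact: mul_continuous.
by move=> i _; apply: cvgD => //; exact: cvg_cst.
Qed.

Lemma P_cvgx (F : set_system R) (FF : Filter F) (f : R -> R) a m : (0 < m)%N ->
  f @ F --> a -> (fun t => P (f t) m) @ F --> P a m.
Proof.
move=> m0 h; rewrite PE //.
apply: cvg_trans (_ : (fun t => A (f t) m * expR (- (f t * ln m%:R))) @ F --> _).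
  by apply: near_eq_cvg; apply: nearW => t; rewrite PE.
apply: cvgM; first exact: A_cvg.
have hN : (fun x => - (f x * ln (m%:R : R))) @ F --> - (a * ln (m%:R : R)).
  by apply: cvgN; apply: cvgM => //; exact: cvg_cst.
exact: (cvg_comp _ _ hN (@continuous_expR R _)).
Qed.

Lemma G_cont1 : G (1 + t) @[t --> (0 : R)] --> G 1.
Proof.
apply/cvgrPdist_lt => e e0.
set m := (Num.truncn (72 / e)).+1.
have m0 : (0 < m)%N by [].
have hm : 72 / e < m%:R by rewrite /m truncnS_gt.
have hmR : (0 : R) < m%:R by rewrite ltr0n.
have hme : 24 / (m%:R : R) < e / 3.
  rewrite ltr_pdivrMr // in hm.
  rewrite ltr_pdivrMr //; nra.
have e3 : 0 < e / 3 by lra.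
have hid : (1 + t) @[t --> (0 : R)] --> (1 : R).
  by rewrite -[X in _ --> X]addr0; apply: cvgD; [exact: cvg_cst | exact: cvg_id].
have Pc : P (1 + t) m @[t --> (0 : R)] --> P 1 m by apply: P_cvgx.
have Pc2 := iffLR (cvgrPdist_lt _ _) Pc _ e3.
have Hid0 : t @[t --> (0 : R)] --> (0 : R) by exact: cvg_id.
have Hid := iffLR (cvgrPdist_lt _ _) Hid0 1 ltr01.
near=> t.
have h1 : `|P 1 m - P (1 + t) m| < e / 3 by near: t; exact: Pc2.
have h2 : `|0 - t| < 1 by near: t; exact: Hid.
rewrite sub0r normrN in h2.
move: h2; rewrite ltr_norml => /andP[h2a h2b].
have [a1 a2] := andP (@PG_err (1 + t) m (ltac:(lra)) (ltac:(lra)) m0).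
have [b1 b2] := andP (@PG_err 1 m (ltac:(lra)) (ltac:(lra)) m0).
move: h1; rewrite !ltr_norml => /andP[c1 c2].
apply/andP; split; lra.
Unshelve. all: by end_near.
Qed.


Lemma G1_gt0 : 0 < G 1.
Proof. by apply: G_gt0_02; lra. Qed.

Lemma G_cont1' : G (t + 1) @[t --> (0 : R)] --> G (0 + 1).
Proof.
rewrite add0r; apply: cvg_trans G_cont1; apply: near_eq_cvg.
by apply: nearW => t; rewrite addrC.
Qed.

Lemma G_cont1'' : G (1 + t) @[t --> (0 : R)] --> G (1 + 0).
Proof. by rewrite addr0; exact: G_cont1. Qed.

Definition eG (a b : nat) : nat := (a <= b)%N.
Definition sG (a b : nat) : nat := if (a <= b)%N then (b - a)%N else 0%N.
Definition hG (a b : nat) (t : R) : R :=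
  if (a <= b)%N then (\prod_(i < b - a) (t - (b - a)%N%:R + i%:R)) * G (t + 1)
  else G (1 + t) / \prod_(i < (a - b).-1) (1 + t + i%:R).

Lemma GhG a b t : -1 < t -> G (a%:R - b%:R + t) = t ^+ eG a b * hG a b t.
Proof.
move=> t1; rewrite /eG /hG; case: leqP => ab.
- set p := (b - a)%N.
  have e : (a%:R - b%:R + t : R) = - p%:R + t by rewrite /p natrB //; ring.
  have hc : cvgn (P (- p%:R + t + p.+1%:R)).
    by apply: P_cvg; rewrite -natr1; lra.
  rewrite e; have [_ ->] := @G_shift p.+1 _ hc.
  rewrite expr1 big_ord_recr /=.
  have -> : - p%:R + t + p.+1%:R = t + 1 by rewrite -natr1; ring.
  have -> : - p%:R + t + p%:R = t by ring.
  have -> : \prod_(i < p) (- p%:R + t + i%:R) = \prod_(i < p) (t - p%:R + i%:R).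
    by apply: eq_bigr => i _; ring.
  ring.
- set q := (a - b).-1.
  have e : (a%:R - b%:R + t : R) = 1 + t + q%:R.
    rewrite /q -natrB ?(ltnW ab) //.
    have -> : (a - b)%N = (a - b).-1.+1 by rewrite prednK // subn_gt0.
    by rewrite -natr1; ring.
  have hq : (0:R) <= q%:R by rewrite ler0n.
  have hc : cvgn (P (1 + t + q%:R)) by apply: P_cvg; lra.
  have [_ e2] := @G_shift q _ hc.
  have hpos : 0 < \prod_(i < q) (1 + t + i%:R).
    by apply: prodr_gt0 => i _; apply: lt_le_trans (_ : 0 < 1 + t) _; [lra | rewrite lerDl].
  rewrite expr0 mul1r e e2 mulrAC divff ?mul1r //; exact: lt0r_neq0.
Qed.

Lemma prod_cvg0 (F : set_system R) {FF : Filter F} (k : nat) (f : 'I_k -> R -> R) (c : 'I_k -> R) :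
  (forall i, f i t @[t --> F] --> c i) ->
  (\prod_(i < k) f i t) @[t --> F] --> \prod_(i < k) c i.
Proof.
move=> h; apply: cvg_big => //; first exact: mul_continuous.
Qed.

Lemma hG_cvg a b : hG a b t @[t --> (0 : R)] --> hG a b 0.
Proof.
rewrite /hG; case: leqP => ab.
- apply: cvgM; last exact: G_cont1'.
  apply: prod_cvg0 => i.
  apply: cvgD; last exact: cvg_cst.
  by apply: cvgB; [exact: cvg_id | exact: cvg_cst].
- apply: cvgM; first exact: G_cont1''.
  apply: cvgV.
    by apply: lt0r_neq0; apply: prodr_gt0 => i _; rewrite addr0 ltr_wpDr.
  apply: prod_cvg0 => i.
  apply: cvgD; last exact: cvg_cst.
  by apply: cvgD; [exact: cvg_cst | exact: cvg_id].
Qed.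

Lemma hG_sign a b : 0 < (-1) ^+ sG a b * hG a b 0.
Proof.
rewrite /sG /hG; case: leqP => ab.
- rewrite mulrA; apply: mulr_gt0; last by rewrite add0r G1_gt0.
  have -> : (-1) ^+ (b - a) = \prod_(i < b - a) (-1 : R) by rewrite prodr_const card_ord.
  rewrite -big_split /=.
  apply: prodr_gt0 => i _; rewrite add0r mulN1r opprD opprK subr_gt0 ltr_nat.
  exact: ltn_ord.
- rewrite expr0 mul1r addr0 divr_gt0 ?G1_gt0 //.
  by apply: prodr_gt0 => i _; rewrite ltr_wpDr.
Qed.

Lemma hG_neq0 a b : hG a b 0 != 0.
Proof.
have := hG_sign a b; apply: contraTneq => ->; by rewrite mulr0 ltxx.
Qed.

End Gam.


Section Sgn.
Variable R : realType.

Definition sgp (e : nat) (v : R) := 0 < (-1) ^+ e * v.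

Lemma sgn_sq e : (-1) ^+ e * (-1) ^+ e = 1 :> R.
Proof. by rewrite -exprD -signr_odd oddD addbb expr0. Qed.

Lemma sgp_mul e1 e2 v1 v2 : sgp e1 v1 -> sgp e2 v2 -> sgp (e1 + e2) (v1 * v2).
Proof.
rewrite /sgp exprD => h1 h2.
have -> : (-1) ^+ e1 * (-1) ^+ e2 * (v1 * v2) = ((-1) ^+ e1 * v1) * ((-1) ^+ e2 * v2) by ring.
exact: mulr_gt0.
Qed.

Lemma sgn_inv e : ((-1) ^+ e)^-1 = (-1) ^+ e :> R.
Proof. by rewrite -signr_odd; case: (odd e); rewrite ?expr0 ?expr1 ?invr1 ?invrN ?invr1. Qed.

Lemma sgp_inv e v : sgp e v -> sgp e v^-1.
Proof.
rewrite /sgp => h; have -> : (-1) ^+ e * v^-1 = ((-1) ^+ e * v)^-1 by rewrite invfM sgn_inv mulrC.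
by rewrite invr_gt0.
Qed.

Lemma sgp_pos v : 0 < v -> sgp 0 v.
Proof. by rewrite /sgp expr0 mul1r. Qed.

Lemma sgp_sign e : sgp e ((-1) ^+ e).
Proof. by rewrite /sgp sgn_sq ltr01. Qed.

Lemma sgp_eq e e' v : (-1) ^+ e = (-1) ^+ e' :> R -> sgp e v -> sgp e' v.
Proof. by rewrite /sgp => ->. Qed.

Lemma sgp_prod k (P : pred 'I_k) (e : 'I_k -> nat) (v : 'I_k -> R) :
  (forall i, P i -> sgp (e i) (v i)) ->
  sgp (\sum_(i < k | P i) e i) (\prod_(i < k | P i) v i).
Proof.
move=> h; apply: (big_ind2 (fun a b => sgp a b)) => //.
- by rewrite /sgp expr0 mul1r ltr01.
- by move=> x1 x2 y1 y2; apply: sgp_mul.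
Qed.

End Sgn.

Section Comb.
Variables (n : nat) (l : 'I_n -> nat).
Hypothesis hl : strictly_decr l.

Lemma decr_ge (i j : 'I_n) : (i <= j)%N -> (l j + (j - i) <= l i)%N.
Proof.
move=> ij.
pose L k := l (insubd i k).
have LE (k : 'I_n) : L k = l k by rewrite /L valKd.
have key : forall d a, (a + d < n)%N -> (L (a + d) + d <= L a)%N.
  elim=> [|d IH] a ad; first by rewrite !addn0.
  have ad' : (a + d < n)%N by lia.
  have h1 := IH a ad'.
  have h2 : (L (a + d.+1) < L (a + d))%N.
    rewrite /L; apply: hl; rewrite !val_insubd.
    have -> : (a + d.+1 < n)%N by [].
    have -> : (a + d < n)%N by lia.
    lia.
  lia.
have := key (j - i)%N i; rewrite subnKC // => /(_ (ltn_ord j)).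
by rewrite !LE.
Qed.

Lemma decr_lb (j : 'I_n) : (n - 1 - j <= l j)%N.
Proof.
pose last := insubd j n.-1.
have hv : val last = n.-1 by rewrite val_insubd; have -> : (n.-1 < n)%N by have := ltn_ord j; lia.
have := @decr_ge j last; rewrite hv.
have := ltn_ord j; move=> hj /(_ ltac:(lia)); lia.
Qed.

Lemma cond_iff (alpha : nat) : (1 <= alpha)%N -> (alpha <= n)%N ->
  (forall j : 'I_n, (n - alpha <= j)%N -> l j = (n - 1 - j)%N) <->
  (forall j : 'I_n, (alpha <= l j)%N = (j < n - alpha)%N).
Proof.
move=> a1 an; split => h j.
- have := decr_lb j; have := ltn_ord j => jn lb.
  case: (ltnP j (n - alpha)) => ja.
  + apply/idP; lia.
  + have := h j ja; move=> e; apply/negbTE; rewrite -ltnNge; lia.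
- move=> ja.
  pose i0 := insubd j (n - alpha)%N.
  have hv : val i0 = (n - alpha)%N by rewrite val_insubd; have -> : (n - alpha < n)%N by lia.
  have h0 := h i0; rewrite hv ltnn in h0.
  have h1 := @decr_ge i0 j; rewrite hv in h1.
  have := h1 ja; have := decr_lb j; have := ltn_ord j.
  move: h0 => /negbT; rewrite -ltnNge; lia.
Qed.

End Comb.

Lemma sum_lt n m : (\sum_(k < n) ((k < m)%N : nat) = minn n m)%N.
Proof.
elim: n => [|n IH]; first by rewrite big_ord0 min0n.
rewrite big_ord_recr /= IH; case: (ltnP n m) => h /=; lia.
Qed.

Lemma sum_eq_iff n (f g : 'I_n -> nat) : (forall j, g j <= f j)%N ->
  (\sum_(j < n) f j = \sum_(j < n) g j)%N <-> (forall j, f j = g j).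
Proof.
move=> hgf; split; last by move=> h; apply: eq_bigr => j _.
have e : (\sum_(j < n) f j = \sum_(j < n) g j + \sum_(j < n) (f j - g j))%N.
  by rewrite -big_split /=; apply: eq_bigr => j _; rewrite subnKC.
move=> h; rewrite h in e.
have /eqP : (\sum_(j < n) (f j - g j) = 0)%N by lia.
rewrite sum_nat_eq0 => /forallP hz j.
have := hz j; have := hgf j; move=> a /eqP b; lia.
Qed.

Unset Implicit Arguments. Set Strict Implicit.

Section Main.
Variables (R : realType) (n alpha : nat).
Hypotheses (hn : (1 <= n)%N) (ha1 : (1 <= alpha)%N) (ha2 : (alpha <= n)%N).
Variable l : 'I_n -> nat.
Hypothesis hl : strictly_decr l.

Definition lam0 : R := alpha%:R - n%:R.
Definition Dp : R := \prod_(a < n) \prod_(b < n | (a < b)%N) ((l a)%:R ^+ 2 - (l b)%:R ^+ 2).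
Definition Kc : R := (-1) ^+ ((n * (n - 1)) %/ 2) * (-1) ^+ (\sum_(j < n) l j) * Dp.
Definition ZZ : nat := \sum_(j < n) (eG alpha (l j) + eG (alpha + l j) 0).
Definition EE : nat := \sum_(k < n) eG (2 * alpha + 2 * k + 1) (2 * n).
Definition H (t : R) : R := \prod_(j < n) (hG alpha (l j) t * hG (alpha + l j) 0 t).
Definition H' (t : R) : R := \prod_(k < n) hG (2 * alpha + 2 * k + 1) (2 * n) (2 * t).
Definition H'0 : R := \prod_(k < n) hG (2 * alpha + 2 * k + 1) (2 * n) 0.
Definition F (t : R) : R := Kc * t ^+ (ZZ - EE) * H t / (2 ^+ EE * H' t).
Definition L0 : R := Kc * 0 ^+ (ZZ - EE) * H 0 / (2 ^+ EE * H'0).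

Lemma alg_cancel (K X Y Hh c H2 : R) : Y != 0 ->
  K * (Y * X * Hh) / (c * Y * H2) = K * X * Hh / (c * H2).
Proof.
move=> hY; rewrite !invfM.
transitivity (K * X * Hh * (c^-1 * H2^-1) * (Y * Y^-1)); first by ring.
by rewrite divff // mulr1 mulrA.
Qed.

Lemma ZZE : ZZ = \sum_(j < n) ((alpha <= l j)%N : nat).
Proof.
apply: eq_bigr => j _; rewrite /eG.
have -> : (alpha + l j <= 0)%N = false by apply/negbTE; rewrite -ltnNge; lia.
by rewrite addn0.
Qed.

Lemma EEE : EE = (n - alpha)%N.
Proof.
rewrite /EE -[RHS](_ : minn n (n - alpha) = n - alpha)%N; last lia.
rewrite -sum_lt; apply: eq_bigr => k _; rewrite /eG.
have -> : (2 * alpha + 2 * k + 1 <= 2 * n)%N = (k < n - alpha)%N.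
  by apply/idP/idP => h; lia.
by [].
Qed.

Lemma EE_le_ZZ : (EE <= ZZ)%N.
Proof.
rewrite ZZE EEE -[X in (X <= _)%N](_ : minn n (n - alpha) = n - alpha)%N; last lia.
rewrite -sum_lt; apply: leq_sum => j _.
have := @decr_lb n l hl j; case: (ltnP j (n - alpha)) => h1 h2 //.
have -> : (alpha <= l j)%N by lia.
by [].
Qed.

Lemma clF t : t != 0 -> `|t| < 1/2 -> cl l (lam0 + t) = F t.
Proof.
move=> t0; rewrite ltr_norml => /andP[ta tb].
have t1 : -1 < t by lra.
have t2 : -1 < 2 * t by lra.
have eA (j : 'I_n) : rgamma (- (l j)%:R + (lam0 + t) + n%:R) = t ^+ eG alpha (l j) * hG alpha (l j) t.
  by rewrite rgammaE -GhG //; congr G; rewrite /lam0; ring.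
have eB (j : 'I_n) : rgamma ((l j)%:R + (lam0 + t) + n%:R) =
    t ^+ eG (alpha + l j) 0 * hG (alpha + l j) 0 t.
  by rewrite rgammaE -GhG //; congr G; rewrite /lam0 natrD; ring.
have eC (k : 'I_n) : rgamma (2 * (lam0 + t) + 2 * (k.+1)%:R - 1) =
    (2 * t) ^+ eG (2 * alpha + 2 * k + 1) (2 * n) * hG (2 * alpha + 2 * k + 1) (2 * n) (2 * t).
  by rewrite rgammaE -GhG //; congr G; rewrite /lam0 !natrD -natr1; ring.
rewrite /cl.
have e1 : \prod_(j < n) (t ^+ eG alpha (l j) * hG alpha (l j) t *
     (t ^+ eG (alpha + l j) 0 * hG (alpha + l j) 0 t)) = t ^+ ZZ * H t.
  rewrite /ZZ -prodrXr /H -big_split /=; apply: eq_bigr => j _; rewrite exprD; ring.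
have e2 : \prod_(k < n) ((2 * t) ^+ eG (2 * alpha + 2 * k + 1) (2 * n) *
     hG (2 * alpha + 2 * k + 1) (2 * n) (2 * t)) = (2 * t) ^+ EE * H' t.
  by rewrite /EE -prodrXr /H' -big_split.
have eP : \prod_(j < n) (rgamma (- (l j)%:R + (lam0 + t) + n%:R) *
    rgamma ((l j)%:R + (lam0 + t) + n%:R)) = t ^+ ZZ * H t.
  by rewrite -e1; apply: eq_bigr => j _; rewrite eA eB.
have eQ : \prod_(k < n) rgamma (2 * (lam0 + t) + 2 * (k.+1)%:R - 1) = (2 * t) ^+ EE * H' t.
  by rewrite -e2; apply: eq_bigr => k _; rewrite eC.
rewrite eP eQ /F -/Dp -/Kc.
have hEZ := EE_le_ZZ.
set d := (ZZ - EE)%N.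
have -> : ZZ = (EE + d)%N by rewrite /d subnKC.
rewrite exprD exprMn alg_cancel //; exact: expf_neq0.
Qed.


Lemma cvg_eqf (T : Type) (FF : set_system T) {FFF : Filter FF} (f g : T -> R) (v : R) :
  (forall x, f x = g x) -> g x @[x --> FF] --> v -> f x @[x --> FF] --> v.
Proof.
move=> e h; apply: cvg_trans h; apply: near_eq_cvg; apply: nearW => x; by rewrite e.
Qed.

Lemma cvg_pow (k : nat) : t ^+ k @[t --> (0 : R)] --> (0 : R) ^+ k.
Proof.
elim: k => [|k IH].
  rewrite expr0; apply: (@cvg_eqf _ _ _ _ (fun _ => 1)); first by move=> x; rewrite expr0.
  exact: cvg_cst.
apply: (@cvg_eqf _ _ _ _ (fun t => t * t ^+ k)); first by move=> x; rewrite exprS.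
rewrite exprS; apply: cvgM; [exact: cvg_id | exact: IH].
Qed.

Lemma sgp_neq0 e (v : R) : sgp e v -> v != 0.
Proof. by rewrite /sgp; apply: contraTneq => ->; rewrite mulr0 ltxx. Qed.

Lemma sgpH0 : sgp (\sum_(j < n) (sG alpha (l j) + sG (alpha + l j) 0)) (H 0).
Proof. by apply: sgp_prod => j _; apply: sgp_mul; exact: hG_sign. Qed.

Lemma sgpH'0 : sgp (\sum_(k < n) sG (2 * alpha + 2 * k + 1) (2 * n)) H'0.
Proof. by apply: sgp_prod => k _; exact: hG_sign. Qed.

Lemma Dp_gt0 : 0 < Dp.
Proof.
apply: prodr_gt0 => a _; apply: prodr_gt0 => b ab.
rewrite subr_gt0 -!natrX ltr_nat ltn_sqr; exact: hl.
Qed.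

Lemma sgpKc : sgp ((n * (n - 1)) %/ 2 + \sum_(j < n) l j + 0) Kc.
Proof.
by apply: sgp_mul; [apply: sgp_mul; exact: sgp_sign | apply: sgp_pos; exact: Dp_gt0].
Qed.

Lemma den_neq0 : 2 ^+ EE * H'0 != 0 :> R.
Proof.
by rewrite mulf_neq0 ?expf_neq0 ?pnatr_eq0 //; exact: sgp_neq0 sgpH'0.
Qed.

Lemma F_cvg : F t @[t --> (0 : R)] --> L0.
Proof.
rewrite /L0; apply: cvgM; first apply: cvgM; first apply: cvgM.
- exact: cvg_cst.
- exact: cvg_pow.
- by apply: prod_cvg0 => j; apply: cvgM; exact: hG_cvg.
- apply: cvgV; first exact: den_neq0.
  apply: cvgM; first exact: cvg_cst.
  apply: prod_cvg0 => k.
  have h2t : (2 * t) @[t --> (0 : R)] --> (0 : R).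
    by rewrite -[X in _ --> X](mulr0 2); apply: cvgM; [exact: cvg_cst | exact: cvg_id].
  have := cvg_comp _ _ h2t (@hG_cvg R (2 * alpha + 2 * k + 1) (2 * n)). exact.
Qed.

Lemma cl_cvg : cl l x @[x --> (lam0)^'] --> L0.
Proof.
have hx : (x - lam0) @[x --> lam0^'] --> (0 : R).
  rewrite -(subrr lam0); apply: cvgB; [exact: nbhs_dnbhs | exact: cvg_cst].
have hFx : F (x - lam0) @[x --> lam0^'] --> L0 := cvg_comp _ _ hx F_cvg.
apply: cvg_trans hFx; apply: near_eq_cvg.
have h12 : (0 : R) < 1 / 2 by lra.
have hd := iffLR (cvgrPdist_lt _ _) hx _ h12.
near=> x.
have xne : x != lam0 by near: x; exact: nbhs_dnbhs_neq.
have hxd : `|0 - (x - lam0)| < 1 / 2 by near: x; exact: hd.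
rewrite sub0r normrN in hxd.
rewrite -clF ?subr_eq0 //; congr (cl l _); by rewrite addrC subrK.
Unshelve. all: by end_near.
Qed.


Lemma Kc_neq0 : Kc != 0. Proof. exact: sgp_neq0 sgpKc. Qed.
Lemma H0_neq0 : H 0 != 0. Proof. exact: sgp_neq0 sgpH0. Qed.

Lemma L0_neq0_iff : L0 != 0 <-> ZZ = EE.
Proof.
have hEZ := EE_le_ZZ.
rewrite /L0 expr0n; split.
- move=> hne.
  have : (ZZ - EE == 0)%N.
    apply/negPn/negP => hd; move: hne.
    by rewrite (negbTE hd) mulr0n mulr0 !mul0r eqxx.
  lia.
- move=> ->; rewrite subnn eqxx mulr1.
  apply: mulf_neq0; [apply: mulf_neq0; [exact: Kc_neq0 | exact: H0_neq0] | by rewrite invr_eq0 den_neq0].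
Qed.

Lemma ZZ_EE_iff : ZZ = EE <-> (forall j : 'I_n, (n - alpha <= j)%N -> l j = (n - 1 - j)%N).
Proof.
rewrite (cond_iff hl ha1 ha2) ZZE EEE.
rewrite -[X in _ = X <-> _](_ : minn n (n - alpha) = n - alpha)%N; last lia.
rewrite -sum_lt.
rewrite (sum_eq_iff (f := fun j : 'I_n => ((alpha <= l j)%N : nat)) (g := fun j : 'I_n => ((j < n - alpha)%N : nat))).
  split => h j; have := h j; by case: (_ <= _)%N; case: (_ < _)%N.
move=> j; have := @decr_lb n l hl j; case: (ltnP j (n - alpha)) => h1 h2 //.
have -> : (alpha <= l j)%N by lia.
by [].
Qed.

Definition N0 : nat := (n * (n - 1)) %/ 2 +
  \sum_(j < n) (if (j < n - alpha)%N then alpha else (n - 1 - j)%N) +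
  \sum_(k < n) ((k < n - alpha)%N : nat).

Lemma sign_odd (a b : nat) : odd a = odd b -> (-1) ^+ a = (-1) ^+ b :> R.
Proof. by move=> h; rewrite -signr_odd h signr_odd. Qed.

Lemma L0_sign : ZZ = EE -> 0 < (-1) ^+ N0 * L0.
Proof.
move=> hZ.
have c := (ZZ_EE_iff.1 hZ).
have hc := (cond_iff hl ha1 ha2).1 c.
have h2 : (0 : R) < 2 ^+ EE by rewrite exprn_gt0.
have s1 := sgp_mul (sgp_mul sgpKc sgpH0) (sgp_inv (sgp_mul (sgp_pos h2) sgpH'0)).
have -> : L0 = Kc * H 0 / (2 ^+ EE * H'0) by rewrite /L0 hZ subnn expr0 mulr1.
move: s1; apply: sgp_eq.
have A1 : (-1) ^+ (\sum_(j < n) l j) * (-1) ^+ (\sum_(j < n) (sG alpha (l j) + sG (alpha + l j) 0)) =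
    (-1) ^+ (\sum_(j < n) (if (j < n - alpha)%N then alpha else (n - 1 - j)%N)) :> R.
  rewrite -!prodrXr -big_split /=; apply: eq_bigr => j _; rewrite -exprD /sG.
  have -> : (alpha + l j <= 0)%N = false by apply/negbTE; rewrite -ltnNge; lia.
  rewrite addn0 hc; case: (ltnP j (n - alpha)) => hj.
  + apply: sign_odd.
    have lj : (alpha <= l j)%N by rewrite hc.
    have -> : (l j + (l j - alpha) = alpha + 2 * (l j - alpha))%N by lia.
    by rewrite oddD oddM /= addbF.
  + by rewrite c // addn0.
have A2 : (-1) ^+ (\sum_(k < n) sG (2 * alpha + 2 * k + 1) (2 * n)) =
    (-1) ^+ (\sum_(k < n) ((k < n - alpha)%N : nat)) :> R.
  rewrite -!prodrXr; apply: eq_bigr => k _; rewrite /sG.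
  case: (ltnP k (n - alpha)) => hk.
  + have -> : (2 * alpha + 2 * k + 1 <= 2 * n)%N by lia.
    apply: sign_odd.
    have -> : (2 * n - (2 * alpha + 2 * k + 1) = 1 + 2 * (n - alpha - k - 1))%N by lia.
    by rewrite oddD oddM.
  + have -> : (2 * alpha + 2 * k + 1 <= 2 * n)%N = false by apply/negbTE; rewrite -ltnNge; lia.
    by [].
rewrite /N0 !exprD -A1 -A2 !expr0; ring.
Qed.

End Main.


Theorem mainTheorem10 (R : realType) (n alpha : nat)
  (hn : (1 <= n)%N) (ha1 : (1 <= alpha)%N) (ha2 : (alpha <= n)%N) :
  (forall l : 'I_n -> nat, strictly_decr l ->
     exists L : R,
       cl l x @[x --> ((alpha%:R - n%:R : R))^'] --> L) /\
  (forall (l : 'I_n -> nat) (L : R), strictly_decr l ->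
     cl l x @[x --> ((alpha%:R - n%:R : R))^'] --> L ->
     (L != 0 <-> (forall j : 'I_n, (n - alpha <= j)%N -> l j = (n - 1 - j)%N))) /\
  (exists s : R, (s = 1 \/ s = -1) /\
     forall (l : 'I_n -> nat) (L : R), strictly_decr l ->
       cl l x @[x --> ((alpha%:R - n%:R : R))^'] --> L -> 0 <= s * L).
Proof.
have key : forall l : 'I_n -> nat, strictly_decr l -> forall L : R,
    cl l x @[x --> ((alpha%:R - n%:R : R))^'] --> L -> L = L0 R n alpha l.
  move=> l hl L hL.
  have h0 := @cl_cvg R n alpha hn ha1 ha2 l hl.
  have e1 : lim (cl l x @[x --> ((alpha%:R - n%:R : R))^']) = L by apply: cvg_lim.
  have e2 : lim (cl l x @[x --> ((alpha%:R - n%:R : R))^']) = L0 R n alpha l by apply: cvg_lim.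
  by rewrite -e1 -e2.
split; [|split].
- move=> l hl; exists (L0 R n alpha l); exact: (@cl_cvg R n alpha hn ha1 ha2 l hl).
- move=> l L hl hL; rewrite (key l hl L hL).
  by rewrite (@L0_neq0_iff R n alpha hn ha1 ha2 l hl) (@ZZ_EE_iff n alpha hn ha1 ha2 l hl).
- exists ((-1) ^+ N0 n alpha); split.
    by rewrite -signr_odd; case: (odd _); [right; rewrite expr1 | left; rewrite expr0].
  move=> l L hl hL; rewrite (key l hl L hL).
  have [hZ|hZ] := eqVneq (ZZ n alpha l) (EE n alpha).
    exact: ltW (@L0_sign R n alpha hn ha1 ha2 l hl hZ).
  have : ~ (L0 R n alpha l != 0) by rewrite (@L0_neq0_iff R n alpha hn ha1 ha2 l hl); move/eqP: hZ.
  by move/negP; rewrite negbK => /eqP ->; rewrite mulr0.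
Qed.
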